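(* Let $d,k,j\ge1$. If there is no $\mathfrak W_k$-equivariant map $Y_{d,k}\to S(U_k^{\oplus j})$, then there is also no $\mathfrak W_k$-equivariant map $Y_{d-1,k}\to S\big(U_k^{\oplus(j-1)}\oplus\bigoplus_{\alpha\in B}V_\alpha\big)$.
   Context: $Y_{d,k}=(S^d)^k$ with $S^d\subset\mathbb{R}^{d+1}$, and $Y_{d-1,k}\subset Y_{d,k}$ is the subspace of tuples with each $x_i\perp e_{d+1}$ (product of equators). $\mathfrak W_k=(\mathbb{Z}/2)^k\rtimes\mathfrak S_k$ acts on $Y_{d,k}$ by $((\beta_1,\dots,\beta_k)\rtimes\tau)\cdot(v_1,\dots,v_k)=((-1)^{\beta_1}v_{\tau^{-1}(1)},\dots,(-1)^{\beta_k}v_{\tau^{-1}(k)})$. $U_k=\{(y_\gamma)_{\gamma\in(\mathbb{Z}/2)^k}:\sum_\gamma y_\gamma=0\}\subset\mathbb{R}^{(\mathbb{Z}/2)^k}$ with $\mathfrak W_k$ permuting coordinates via the action on indices $((\beta)\rtimes\tau)\cdot\gamma=(\beta_1+\gamma_{\tau^{-1}(1)},\dots,\beta_k+\gamma_{\tau^{-1}(k)})$ mod 2; $U_k^{\oplus j}$ carries the diagonal action, $S(\cdot)$ denotes the unit sphere. For $\alpha\in(\mathbb{Z}/2)^k\setminus\{0\}$, $V_\alpha\subset U_k$ is the line spanned by $((-1)^{\langle\alpha,\gamma\rangle})_{\gamma}$; as a $(\mathbb{Z}/2)^k$-representation $\beta$ acts on $V_\alpha$ by $(-1)^{\sum_i\alpha_i\beta_i}$,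 and $U_k=\bigoplus_{\alpha\ne0}V_\alpha$. $B\subset(\mathbb{Z}/2)^k$ is the set of $\alpha$ with at least two nonzero coordinates; $\bigoplus_{\alpha\in B}V_\alpha$ is a $\mathfrak W_k$-invariant subspace of $U_k$. *)

(* Defs.v *)
From mathcomp Require Import all_boot fingroup perm.
From Stdlib Require Import Reals.
Set Implicit Arguments. Unset Strict Implicit. Unset Printing Implicit Defensive.

Local Open Scope R_scope.

Definition rsum {T : finType} (F : T -> R) : R := \big[Rplus/0]_(t : T) F t.

(* (Z/2)^k, with Z/2 = bool and addition = xorb *)
Definition Z2k (k : nat) : finType := {ffun 'I_k -> bool}.

(* the group W_k = (Z/2)^k x| S_k, elements (beta, tau) *)
Definition Wk (k : nat) : Type := (Z2k k * {perm 'I_k})%type.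

Definition sgnb (b : bool) : R := if b then -1 else 1.

Definition PtY (d k : nat) : Type := 'I_k -> 'I_d.+1 -> R.
Definition PtU (j k : nat) : Type := 'I_j -> Z2k k -> R.

Definition actY (d k : nat) (g : Wk k) (v : PtY d k) : PtY d k :=
  fun i m => sgnb (g.1 i) * v ((g.2)^-1%g i) m.

Definition act_idx (k : nat) (g : Wk k) (gam : Z2k k) : Z2k k :=
  [ffun i => xorb (g.1 i) (gam ((g.2)^-1%g i))].

Definition winv (k : nat) (g : Wk k) : Wk k :=
  ([ffun i => g.1 (g.2 i)], (g.2)^-1%g).

(* permutation action on R^{(Z/2)^k}: (g.y)_{g.gamma} = y_gamma *)
Definition actU (k : nat) (g : Wk k) (y : Z2k k -> R) : Z2k k -> R :=
  fun gam => y (act_idx (winv g) gam).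

Definition actUj (j k : nat) (g : Wk k) (y : PtU j k) : PtU j k :=
  fun i => actU g (y i).

Definition inY (d k : nat) (x : PtY d k) : Prop :=
  forall i, rsum (fun m : 'I_d.+1 => (x i m)^2) = 1.

(* Y_{d-1,k} inside Y_{d,k}: each x_i orthogonal to e_{d+1} *)
Definition inYeq (d k : nat) (x : PtY d k) : Prop :=
  inY x /\ forall i, x i ord_max = 0.

Definition inU (k : nat) (y : Z2k k -> R) : Prop := rsum y = 0.

(* <alpha, gamma> mod 2 and the character vector spanning V_alpha *)
Definition pairing (k : nat) (a gam : Z2k k) : bool :=
  \big[xorb/false]_(i : 'I_k) (a i && gam i).
Definition chi (k : nat) (a : Z2k k) (gam : Z2k k) : R := sgnb (pairing a gam).

Definition inB (k : nat) (a : Z2k k) : bool := leq 2 #|[pred i | a i]|.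

Definition inWB (k : nat) (y : Z2k k -> R) : Prop :=
  exists c : Z2k k -> R,
    forall gam, y gam = rsum (fun a : Z2k k => if inB a then c a * chi a gam else 0).

Definition normsq (j k : nat) (y : PtU j k) : R :=
  rsum (fun i : 'I_j => rsum (fun gam : Z2k k => (y i gam)^2)).

Definition inSU (j k : nat) (y : PtU j k) : Prop :=
  (forall i, inU (y i)) /\ normsq y = 1.

(* S(U_k^{(+)(j-1)} (+) (+)_{alpha in B} V_alpha): the last (j-th) summand
   lies in (+)_{alpha in B} V_alpha, the others in U_k *)
Definition inSUB (j k : nat) (y : PtU j k) : Prop :=
  (forall i : 'I_j, if nat_of_ord i == j.-1 then inWB (y i) else inU (y i))
  /\ normsq y = 1.

Definition dist2 {A B : finType} (x y : A -> B -> R) : R :=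
  rsum (fun a => rsum (fun b => (x a b - y a b)^2)).

Definition cont_on {A B C D : finType} (P : (A -> B -> R) -> Prop)
    (f : (A -> B -> R) -> (C -> D -> R)) : Prop :=
  forall x, P x -> forall eps, 0 < eps -> exists del, 0 < del /\
    forall x', P x' -> dist2 x x' < del -> dist2 (f x) (f x') < eps.

Definition exists_equiv_map (d j k : nat) (dom : PtY d k -> Prop)
    (cod : PtU j k -> Prop) : Prop :=
  exists f : PtY d k -> PtU j k,
    (forall x, dom x -> cod (f x)) /\
    @cont_on 'I_k 'I_d.+1 'I_j (Z2k k) dom f /\
    (forall (g : Wk k) x, dom x -> f (actY g x) = actUj g (f x)).

(* Main.v *)
Require Import Defs.
From mathcomp Require Import all_boot fingroup perm.
From Stdlib Require Import Reals.
From HB Require Import structures.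
From Stdlib Require Import Lra FunctionalExtensionality Classical.

Module Aux.
Set Implicit Arguments. Unset Strict Implicit. Unset Printing Implicit Defensive.
Local Open Scope R_scope.

HB.instance Definition _ := Monoid.isComLaw.Build R 0 Rplus
  (fun a b c => esym (Rplus_assoc a b c)) Rplus_comm Rplus_0_l.

Lemma rsum_ge0 (T : finType) (F : T -> R) : (forall t, 0 <= F t) -> 0 <= rsum F.
Proof. move=> H; rewrite /rsum; apply: (big_ind (fun x => 0 <= x)) => //; [lra| move=> *; lra]. Qed.

Lemma rsum_ge_term (T : finType) (F : T -> R) t0 : (forall t, 0 <= F t) -> F t0 <= rsum F.
Proof.
move=> H; rewrite /rsum (bigD1 t0) //=.
have : 0 <= \big[Rplus/0]_(i | i != t0) F i.
  by apply: (big_ind (fun x => 0 <= x)) => //; [lra| move=> *; lra].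
lra.
Qed.

Lemma rsum_split (T : finType) (F G : T -> R) : rsum (fun t => F t + G t) = rsum F + rsum G.
Proof. by rewrite /rsum big_split. Qed.

Lemma rsum_seq_scal (T : Type) (s : seq T) (F : T -> R) c :
  \big[Rplus/0]_(t <- s) (c * F t) = c * \big[Rplus/0]_(t <- s) F t.
Proof. elim: s => [|a s IH]; rewrite ?big_nil ?big_cons; [ring| rewrite IH; ring]. Qed.

Lemma rsum_scal (T : finType) (F : T -> R) c : rsum (fun t => c * F t) = c * rsum F.
Proof. exact: rsum_seq_scal. Qed.

Lemma rsum_ext (T : finType) (F G : T -> R) : (forall t, F t = G t) -> rsum F = rsum G.
Proof. by move=> H; rewrite /rsum; apply: eq_bigr. Qed.

Lemma rsum0 (T : finType) : rsum (fun _ : T => 0) = 0.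
Proof. by rewrite /rsum big1. Qed.

Lemma rsum_exch (T U : finType) (F : T -> U -> R) :
  rsum (fun t => rsum (fun u => F t u)) = rsum (fun u => rsum (fun t => F t u)).
Proof. by rewrite /rsum exchange_big. Qed.

Lemma rsum_reindex (T : finType) (F : T -> R) (h : T -> T) : injective h ->
  rsum F = rsum (fun t => F (h t)).
Proof. by move=> hi; rewrite /rsum (reindex_inj hi). Qed.

Lemma rsum_seq_le (T : Type) (s : seq T) (F : T -> R) c :
  (forall t, F t <= c) -> \big[Rplus/0]_(t <- s) F t <= INR (size s) * c.
Proof.
move=> H; elim: s => [|a s IH]; rewrite ?big_nil ?big_cons; first by rewrite /=; lra.
rewrite [size _]/= S_INR; have := H a; lra.
Qed.

Lemma rsum_le_card (T : finType) (F : T -> R) c :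
  (forall t, F t <= c) -> rsum F <= INR (size (index_enum T)) * c.
Proof. exact: rsum_seq_le. Qed.

Lemma rsum_eq0 (T : finType) (F : T -> R) : (forall t, F t = 0) -> rsum F = 0.
Proof. by move=> H; rewrite -(rsum0 T); apply: rsum_ext. Qed.

Section Cont.
Variables A B : finType.
Notation Pt := (A -> B -> R).
Variable P : Pt -> Prop.

Definition rcat (F : Pt -> R) (x0 : Pt) : Prop :=
  forall eps, 0 < eps -> exists del, 0 < del /\
    forall x, P x -> dist2 x0 x < del -> Rabs (F x - F x0) < eps.

Lemma cat_const c x0 : rcat (fun _ => c) x0.
Proof. move=> e he; exists 1; split; first lra; move=> x _ _; rewrite Rminus_diag Rabs_R0 //. Qed.

Lemma sq_lt_abs u e : 0 < e -> u ^ 2 < e ^ 2 -> Rabs u < e.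
Proof.
move=> he hu; destruct (Rlt_le_dec (Rabs u) e) as [h|h] => //.
have : e ^ 2 <= Rabs u ^ 2 by apply: pow_incr; lra.
rewrite pow2_abs; lra.
Qed.

Lemma dist2_coord (x y : Pt) a b : (x a b - y a b) ^ 2 <= dist2 x y.
Proof.
rewrite /dist2.
have h1 := @rsum_ge_term _ (fun a => rsum (fun b => (x a b - y a b) ^ 2)) a
  (fun t => rsum_ge0 (fun u => pow2_ge_0 _)).
have h2 := @rsum_ge_term _ (fun b => (x a b - y a b) ^ 2) b (fun t => pow2_ge_0 _).
exact: Rle_trans h2 h1.
Qed.

Lemma cat_coord a b x0 : rcat (fun x => x a b) x0.
Proof.
move=> e he; exists (e ^ 2); split; first by apply: pow_lt.
move=> x _ hd; rewrite -Rabs_Ropp Ropp_minus_distr.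
apply: sq_lt_abs => //; have := dist2_coord x0 x a b; lra.
Qed.

Lemma cat_add F G x0 : rcat F x0 -> rcat G x0 -> rcat (fun x => F x + G x) x0.
Proof.
move=> hF hG e he.
have [d1 [h1 H1]] := hF (e/2) ltac:(lra).
have [d2 [h2 H2]] := hG (e/2) ltac:(lra).
exists (Rmin d1 d2); split; first by apply: Rmin_pos.
move=> x px hd.
have := H1 x px (Rlt_le_trans _ _ _ hd (Rmin_l _ _)).
have := H2 x px (Rlt_le_trans _ _ _ hd (Rmin_r _ _)).
move=> a b; replace (F x + G x - (F x0 + G x0)) with ((F x - F x0) + (G x - G x0)) by ring.
apply: Rle_lt_trans (Rabs_triang _ _) _; lra.
Qed.

Lemma cat_comp (phi : R -> R) F x0 : rcat F x0 -> continuity_pt phi (F x0) ->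
  rcat (fun x => phi (F x)) x0.
Proof.
move=> hF hphi e he.
have [alp [ha Ha]] := hphi e he.
have [d [hd Hd]] := hF alp ha.
exists d; split => // x px hx.
have := Hd x px hx => hh.
destruct (Req_dec (F x) (F x0)) as [E|E].
  by rewrite E Rminus_diag Rabs_R0.
by apply: (Ha (F x)); split => //; split => //; auto.
Qed.

Lemma cont_id y : continuity_pt (fun x => x) y.
Proof. exact: (derivable_continuous_pt _ _ (derivable_pt_id y)). Qed.

Lemma cat_scal c F x0 : rcat F x0 -> rcat (fun x => c * F x) x0.
Proof.
move=> h; apply: (cat_comp (phi := fun y => c * y)) h _.
exact: (continuity_pt_scal (fun y => y) c _ (cont_id _)).
Qed.

Lemma cat_sq F x0 : rcat F x0 -> rcat (fun x => F x * F x) x0.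
Proof.
move=> h; apply: (cat_comp (phi := fun y => y * y)) h _.
exact: (continuity_pt_mult (fun y => y) (fun y => y) _ (cont_id _) (cont_id _)).
Qed.

Lemma cat_ext F G x0 : (forall x, F x = G x) -> rcat F x0 -> rcat G x0.
Proof.
move=> E h e he; have [d [hd H]] := h e he; exists d; split => // x px hx.
by rewrite -!E; apply: H.
Qed.

Lemma cat_mul F G x0 : rcat F x0 -> rcat G x0 -> rcat (fun x => F x * G x) x0.
Proof.
move=> hF hG.
have h1 := cat_sq (cat_add hF hG).
have h2 := cat_sq (cat_add hF (cat_scal (-1) hG)).
have := cat_scal (/4) (cat_add h1 (cat_scal (-1) h2)).
apply: cat_ext => x; field.
Qed.

Lemma cat_pow2 F x0 : rcat F x0 -> rcat (fun x => F x ^ 2) x0.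
Proof. move=> h; apply: cat_ext (cat_sq h) => x; ring. Qed.

Lemma cat_seq_sum (T : Type) (s : seq T) (F : T -> Pt -> R) x0 :
  (forall t, rcat (F t) x0) -> rcat (fun x => \big[Rplus/0]_(t <- s) F t x) x0.
Proof.
move=> h; elim: s => [|a s IH].
  by apply: cat_ext (cat_const 0 x0) => x; rewrite big_nil.
by apply: cat_ext (cat_add (h a) IH) => x; rewrite big_cons.
Qed.

Lemma cat_rsum (T : finType) (F : T -> Pt -> R) x0 :
  (forall t, rcat (F t) x0) -> rcat (fun x => rsum (fun t => F t x)) x0.
Proof. exact: cat_seq_sum. Qed.

Lemma cat_local F G x0 r : 0 < r -> P x0 ->
  (forall x, P x -> dist2 x0 x < r -> F x = G x) -> rcat G x0 -> rcat F x0.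
Proof.
move=> hr px0 E h e he; have [d [hd H]] := h e he.
exists (Rmin d r); split; first by apply: Rmin_pos.
move=> x px hx.
have hx1 := Rlt_le_trans _ _ _ hx (Rmin_l _ _).
have hx2 := Rlt_le_trans _ _ _ hx (Rmin_r _ _).
have d0 : dist2 x0 x0 = 0.
  by rewrite /dist2 -(rsum0 A); apply: rsum_ext => a; rewrite -(rsum0 B);
     apply: rsum_ext => b; ring.
rewrite (E x px hx2) (E x0 px0); [by apply: H| lra].
Qed.

Lemma cat_bmul F G x0 : rcat F x0 -> F x0 = 0 ->
  (forall x, P x -> F x <> 0 -> Rabs (G x) <= 1) ->
  rcat (fun x => F x * G x) x0.
Proof.
move=> h F0 hG e he; have [d [hd H]] := h e he; exists d; split => // x px hx.
have := H x px hx; rewrite F0 Rmult_0_l !Rminus_0_r Rabs_mult => h1.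
destruct (Req_dec (F x) 0) as [E|E].
  by rewrite E Rabs_R0 Rmult_0_l.
have := hG x px E; have := Rabs_pos (F x); have := Rabs_pos (G x); nra.
Qed.

End Cont.

Section VCont.
Variables A B C D : finType.
Variable P : (A -> B -> R) -> Prop.

Definition vat (f : (A -> B -> R) -> (C -> D -> R)) x0 : Prop :=
  forall eps, 0 < eps -> exists del, 0 < del /\
    forall x, P x -> dist2 x0 x < del -> dist2 (f x0) (f x) < eps.

Lemma vat_coord f x0 c d : vat f x0 -> rcat P (fun x => f x c d) x0.
Proof.
move=> h e he; have [del [hd H]] := h (e ^ 2) (pow_lt _ _ he).
exists del; split => // x px hx; rewrite -Rabs_Ropp Ropp_minus_distr.
apply: sq_lt_abs => //; have := dist2_coord (f x0) (f x) c d; have := H x px hx; lra.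
Qed.

Lemma seq_min (T : eqType) (s : seq T) (Q : T -> R -> Prop) :
  (forall t d1 d2, 0 < d1 -> d1 <= d2 -> Q t d2 -> Q t d1) ->
  (forall t, exists d, 0 < d /\ Q t d) -> exists d, 0 < d /\ forall t, t \in s -> Q t d.
Proof.
move=> mono ex; elim: s => [|a s [d [hd H]]]; first by exists 1; split => //; lra.
have [da [hda Ha]] := ex a.
exists (Rmin d da); split; first by apply: Rmin_pos.
move=> t; rewrite in_cons => /orP [/eqP -> | ht].
  by apply: mono Ha => //; [apply: Rmin_pos | apply: Rmin_r].
by apply: mono (H t ht) => //; [apply: Rmin_pos | apply: Rmin_l].
Qed.

Lemma coord_vat f x0 : (forall c d, rcat P (fun x => f x c d) x0) -> vat f x0.
Proof.
move=> h e he.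
set M := INR (size (index_enum C)) * INR (size (index_enum D)).
have hM : 0 <= M by rewrite /M; apply: Rmult_le_pos; apply: pos_INR.
set eta := Rmin 1 (e / (M + 1)).
have heta : 0 < eta by apply: Rmin_pos; [lra | apply: Rdiv_lt_0_compat; lra].
have [del [hd H]] := seq_min (index_enum (prod C D))
  (Q := fun t del => forall x, P x -> dist2 x0 x < del -> Rabs (f x t.1 t.2 - f x0 t.1 t.2) < eta)
  ltac:(move=> t d1 d2 h1 h12 HH x px hx; apply: HH px _; lra)
  ltac:(move=> [c d]; exact: h c d eta heta).
exists del; split => // x px hx.
have term : forall c d, (f x0 c d - f x c d) ^ 2 <= eta.
  move=> c d; have := H (c, d) (mem_index_enum _) x px hx => /= hh.
  rewrite -Rabs_Ropp Ropp_minus_distr in hh.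
  have e1 : eta <= 1 by apply: Rmin_l.
  set u := f x0 c d - f x c d in hh *.
  have E : u * u = Rabs u * Rabs u by rewrite -Rabs_mult Rabs_pos_eq //; nra.
  rewrite Rmult_1_r E; have := Rabs_pos u; nra.
have : dist2 (f x0) (f x) <= INR (size (index_enum C)) * (INR (size (index_enum D)) * eta).
  rewrite /dist2; apply: rsum_le_card => c; apply: rsum_le_card => d; exact: term.
have e2 : eta <= e / (M + 1) by apply: Rmin_r.
have : M * eta <= M * (e / (M + 1)) by apply: Rmult_le_compat_l.
have : M * (e / (M + 1)) < e.
  apply: (Rmult_lt_reg_r (M + 1)); first lra.
  field_simplify; [nra | lra].
rewrite /M; nra.
Qed.

End VCont.

Lemma xorbE : xorb =2 addb. Proof. by case; case. Qed.

Lemma big_xorb (T : Type) (s : seq T) (F : T -> bool) :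
  \big[xorb/false]_(t <- s) F t = \big[addb/false]_(t <- s) F t.
Proof. by elim: s => [|a s IH]; rewrite ?big_nil ?big_cons // IH xorbE. Qed.

Section Chars.
Variable k : nat.
Notation Z := (Z2k k).

Definition xorf (a b : Z) : Z := [ffun i => a i (+) b i].
Definition ev (i : 'I_k) : Z := [ffun m => m == i].
Definition zf : Z := [ffun _ => false].

Lemma pairingE (a g : Z) : pairing a g = \big[addb/false]_i (a i && g i).
Proof. exact: big_xorb. Qed.

Lemma pairingC (a g : Z) : pairing a g = pairing g a.
Proof. by rewrite !pairingE; apply: eq_bigr => i _; rewrite andbC. Qed.

Lemma pairingDl (a b g : Z) : pairing (xorf a b) g = pairing a g (+) pairing b g.
Proof.
rewrite !pairingE -big_split /=; apply: eq_bigr => i _.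
by rewrite ffunE; case: (a i); case: (b i); case: (g i).
Qed.

Lemma pairing_ev (i : 'I_k) (g : Z) : pairing (ev i) g = g i.
Proof.
rewrite pairingE (bigD1 i) //= ffunE eqxx /= big1 ?addbF // => m hm.
by rewrite ffunE (negbTE hm).
Qed.

Lemma sgnbD x y : sgnb (x (+) y) = sgnb x * sgnb y.
Proof. by case: x; case: y; rewrite /sgnb /=; ring. Qed.

Lemma sgnb2 x : sgnb x * sgnb x = 1.
Proof. by case: x; rewrite /sgnb; ring. Qed.

Lemma chi_ev (a g : Z) i : chi a g * sgnb (g i) = chi (xorf a (ev i)) g.
Proof. by rewrite /chi pairingDl sgnbD pairing_ev. Qed.

Lemma xorf_inj a : injective (xorf a).
Proof.
move=> b c /ffunP E; apply/ffunP => i; have := E i; rewrite !ffunE.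
by case: (a i); case: (b i); case: (c i).
Qed.

Lemma xorfC a b : xorf a b = xorf b a.
Proof. by apply/ffunP => i; rewrite !ffunE addbC. Qed.

Lemma chi_sum0 (a : Z) : a != zf -> rsum (chi a) = 0.
Proof.
move=> ha.
have [m am] : exists m, a m.
  apply/existsP; apply: contraR ha; rewrite negb_exists => /forallP H.
  by apply/eqP/ffunP => i; rewrite ffunE; apply/negbTE/H.
have E := rsum_reindex (chi a) (@xorf_inj (ev m)).
have : rsum (chi a) = - rsum (chi a).
  rewrite {1}E (_ : - rsum (chi a) = -1 * rsum (chi a)); last ring.
  rewrite -rsum_scal; apply: rsum_ext => g.
  by rewrite /chi xorfC pairingC pairingDl pairingC sgnbD pairingC pairing_ev am /sgnb; ring.
lra.
Qed.

Lemma chi_zf (g : Z) : chi zf g = 1.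
Proof. by rewrite /chi pairingE big1 // => i _; rewrite ffunE. Qed.

Lemma xorf_eq0 a b : (xorf a b == zf) = (a == b).
Proof.
apply/eqP/eqP => [/ffunP E | ->].
  by apply/ffunP => i; have := E i; rewrite !ffunE; case: (a i); case: (b i).
by apply/ffunP => i; rewrite !ffunE addbb.
Qed.

Lemma rsum1_pos : 0 < rsum (fun _ : Z => 1).
Proof. have := @rsum_ge_term _ (fun _ : Z => 1) zf (fun _ => Rle_0_1); lra. Qed.

Lemma card_ev i : #|[pred m | ev i m]| = S O.
Proof. rewrite -(card1 i); apply: eq_card => m. rewrite !inE. rewrite /ev ffunE. done. Qed.

Lemma inB_neq a i : inB a -> a != ev i.
Proof. by rewrite /inB; apply: contraL => /eqP ->; rewrite card_ev. Qed.

Lemma inB_neq0 a : inB a -> a != zf.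
Proof.
rewrite /inB; apply: contraL => /eqP ->.
by rewrite (@eq_card _ _ pred0) ?card0 // => m; rewrite !inE /zf ffunE.
Qed.

Definition Tv (t : 'I_k -> R) (g : Z) : R := rsum (fun l => t l * sgnb (g l)).

Lemma Tv_sum t : rsum (Tv t) = 0.
Proof.
rewrite /Tv rsum_exch -(rsum0 'I_k); apply: rsum_ext => l.
rewrite rsum_scal (_ : rsum _ = rsum (chi (ev l))).
  by rewrite chi_sum0 ?Rmult_0_r //; apply/negP => /eqP /ffunP /(_ l); rewrite !ffunE eqxx.
by apply: rsum_ext => g; rewrite /chi pairing_ev.
Qed.

Lemma Tv_dot t i : rsum (fun g => Tv t g * sgnb (g i)) = t i * rsum (fun _ : Z => 1).
Proof.
rewrite /Tv.
rewrite (rsum_ext (G := fun g => rsum (fun l => t l * chi (xorf (ev l) (ev i)) g))); last first.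
  move=> g; rewrite Rmult_comm -rsum_scal; apply: rsum_ext => l.
  by rewrite -chi_ev /chi pairing_ev; ring.
rewrite rsum_exch /rsum (bigD1 i) //= [X in _ + X]big1.
  rewrite Rplus_0_r; have -> : xorf (ev i) (ev i) = zf by apply/eqP; rewrite xorf_eq0.
  by rewrite -/(rsum _) rsum_scal; congr (_ * _); apply: rsum_ext => g; rewrite chi_zf.
move=> l hl; rewrite -/(rsum _) rsum_scal chi_sum0 ?Rmult_0_r //.
by rewrite xorf_eq0; apply/negP => /eqP /ffunP /(_ l); rewrite !ffunE eqxx (negbTE hl).
Qed.

Lemma WB_props (w : Z -> R) : inWB w -> rsum w = 0 /\ forall i, rsum (fun g => w g * sgnb (g i)) = 0.
Proof.
move=> [c hc]; split.
  rewrite (rsum_ext hc) rsum_exch; apply: rsum_eq0 => a.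
  case hB: (inB a); last exact: rsum0.
  by rewrite rsum_scal chi_sum0 ?Rmult_0_r // inB_neq0.
move=> i.
rewrite (rsum_ext (G := fun g => rsum (fun a => if inB a then c a * chi (xorf a (ev i)) g else 0))); last first.
  move=> g; rewrite hc Rmult_comm -rsum_scal; apply: rsum_ext => a.
  by case: ifP => _; [rewrite -chi_ev; ring | ring].
rewrite rsum_exch; apply: rsum_eq0 => a.
case hB: (inB a); last exact: rsum0.
by rewrite rsum_scal chi_sum0 ?Rmult_0_r // xorf_eq0 inB_neq.
Qed.

End Chars.

Lemma rsum_pick (T : finType) (F : T -> R) t0 : rsum (fun t => if t == t0 then F t else 0) = F t0.
Proof.
rewrite /rsum (bigD1 t0) //= eqxx [X in _ + X]big1 ?Rplus_0_r // => t ht.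
by rewrite (negbTE ht).
Qed.

Lemma sgnb_sq b : sgnb b ^ 2 = 1.
Proof. by case: b; rewrite /sgnb; ring. Qed.

Section Main.
Variables d k j : nat.

Definition tl (x : PtY d k) (l : 'I_k) : R := x l ord_max.
Definition rhoS (x : PtY d k) : R := rsum (fun l => tl x l ^ 2).
Definition rho (x : PtY d k) : R := ((1 - 2 * rhoS x) + Rabs (1 - 2 * rhoS x)) / 2.
Definition sN (x : PtY d k) (i : 'I_k) : R :=
  rsum (fun m : 'I_d.+1 => if m == ord_max then 0 else x i m ^ 2).
Definition Nm (x : PtY d k) : PtY d k :=
  fun i m => if m == ord_max then 0 else x i m * / sqrt (sN x i).

Lemma rho_ge0 x : 0 <= rho x.
Proof. rewrite /rho; have := Rle_abs (- (1 - 2 * rhoS x)); rewrite Rabs_Ropp; lra. Qed.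

Lemma rho_pos x : rho x <> 0 -> rhoS x < 1/2.
Proof.
rewrite /rho => h; destruct (Rle_lt_dec (1 - 2 * rhoS x) 0) as [h1|h1]; last lra.
by rewrite Rabs_left1 // in h; lra.
Qed.

Lemma rho_one x : (forall l, tl x l = 0) -> rho x = 1.
Proof.
move=> h; have E : rhoS x = 0 by apply: rsum_eq0 => l; rewrite h; ring.
rewrite /rho E Rabs_right; lra.
Qed.

Lemma sN_inY x i : inY x -> sN x i = 1 - tl x i ^ 2.
Proof.
move=> hx; rewrite -(hx i) /sN /tl.
have -> : rsum (fun m : 'I_d.+1 => x i m ^ 2) =
   rsum (fun m => if m == ord_max then 0 else x i m ^ 2) +
   rsum (fun m => if m == ord_max then x i m ^ 2 else 0).
  by rewrite -rsum_split; apply: rsum_ext => m; case: (m == ord_max); ring.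
rewrite rsum_pick /Rminus Rplus_assoc Rplus_opp_r Rplus_0_r; reflexivity.
Qed.

Lemma tl_le x i : tl x i ^ 2 <= rhoS x.
Proof. exact: (@rsum_ge_term _ (fun l => tl x l ^ 2) i (fun t => pow2_ge_0 _)). Qed.

Lemma sN_pos x i : inY x -> rho x <> 0 -> 1/2 < sN x i.
Proof. move=> hx hr; rewrite sN_inY //; have := rho_pos hr; have := tl_le x i; lra. Qed.

Lemma Nm_inYeq x : (forall i, 0 < sN x i) -> inYeq (Nm x).
Proof.
move=> hs; split => i; last by rewrite /Nm eqxx.
rewrite /Nm.
rewrite (rsum_ext (G := fun m => / sN x i * (if m == ord_max then 0 else x i m ^ 2))).
  by rewrite rsum_scal -/(sN x i); field; have := hs i; lra.
move=> m; case: (m == ord_max); first ring.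
have := hs i => h; rewrite Rpow_mult_distr pow_inv -[sqrt _ ^ 2]/(sqrt (sN x i) * (sqrt (sN x i) * 1)).
rewrite Rmult_1_r sqrt_sqrt; [ring | lra].
Qed.

Lemma act_idx_inj (h : Wk k) : injective (act_idx h).
Proof.
move=> a b /ffunP E; apply/ffunP => m; have := E (h.2 m); rewrite !ffunE permK.
by rewrite !xorbE; case: (h.1 _); case: (a m); case: (b m).
Qed.

Lemma rsum_actU (h : Wk k) (y : Z2k k -> R) : rsum (actU h y) = rsum y.
Proof. by rewrite /actU -(rsum_reindex y (@act_idx_inj (winv h))). Qed.

Lemma normsq_act (h : Wk k) (y : PtU j k) : normsq (actUj h y) = normsq y.
Proof.
rewrite /normsq /actUj; apply: rsum_ext => i.
by rewrite /actU -(rsum_reindex (fun g => y i g ^ 2) (@act_idx_inj (winv h))).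
Qed.

Lemma tl_act (h : Wk k) x l : tl (actY h x) l = sgnb (h.1 l) * tl x ((h.2)^-1%g l).
Proof. by []. Qed.

Lemma rhoS_act (h : Wk k) x : rhoS (actY h x) = rhoS x.
Proof.
rewrite /rhoS (rsum_reindex (fun l => tl x l ^ 2) (@perm_inj _ ((h.2)^-1%g))).
by apply: rsum_ext => l; rewrite tl_act Rpow_mult_distr sgnb_sq Rmult_1_l.
Qed.

Lemma rho_act (h : Wk k) x : rho (actY h x) = rho x.
Proof. by rewrite /rho rhoS_act. Qed.

Lemma sN_act (h : Wk k) x i : sN (actY h x) i = sN x ((h.2)^-1%g i).
Proof.
rewrite /sN /actY; apply: rsum_ext => m; case: (m == ord_max) => //.
by rewrite Rpow_mult_distr sgnb_sq Rmult_1_l.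
Qed.

Lemma Nm_act (h : Wk k) x : Nm (actY h x) = actY h (Nm x).
Proof.
apply: functional_extensionality => i; apply: functional_extensionality => m.
rewrite /Nm sN_act /actY; case: (m == ord_max); [ring | ring].
Qed.

Lemma Tv_act (h : Wk k) x g : Tv (tl (actY h x)) g = Tv (tl x) (act_idx (winv h) g).
Proof.
rewrite /Tv (rsum_reindex _ (@perm_inj _ h.2)); apply: rsum_ext => l.
rewrite tl_act permK !ffunE /= invgK xorbE sgnbD; ring.
Qed.

End Main.

Section Cont2.
Variables d k : nat.
Notation P := (@inY d k).

Lemma cont_invsqrt y : 0 < y -> continuity_pt (fun z => / sqrt z) y.
Proof.
move=> hy; apply: (continuity_pt_inv sqrt y (continuity_pt_sqrt _ (Rlt_le _ _ hy))).
by apply: Rgt_not_eq; apply: sqrt_lt_R0.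
Qed.

Lemma c_tl x0 l : rcat P (fun x : PtY d k => tl x l) x0.
Proof. exact: cat_coord. Qed.

Lemma c_rhoS x0 : rcat P (@rhoS d k) x0.
Proof. by apply: cat_rsum => l; apply: cat_pow2; apply: c_tl. Qed.

Lemma c_rho x0 : rcat P (@rho d k) x0.
Proof.
have h1 : rcat P (fun x => 1 + (-2) * rhoS x) x0 by apply: cat_add (cat_const _ _ _) (cat_scal _ (c_rhoS _)).
have h2 := cat_comp h1 (Rcontinuity_abs _).
apply: cat_ext (cat_scal (/2) (cat_add h1 h2)) => x.
by rewrite /rho (_ : 1 - 2 * rhoS x = 1 + (-2) * rhoS x); [field | ring].
Qed.

Lemma c_sN x0 i : rcat P (fun x => sN x i) x0.
Proof.
apply: cat_rsum => m; case: (m == ord_max); first exact: cat_const.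
by apply: cat_pow2; apply: cat_coord.
Qed.

Lemma vat_Nm x0 : (forall i, 0 < sN x0 i) -> vat P (@Nm d k) x0.
Proof.
move=> hs; apply: coord_vat => i m; rewrite /Nm; case: (m == ord_max); first exact: cat_const.
apply: cat_mul; first exact: cat_coord.
exact: (cat_comp (c_sN x0 i) (cont_invsqrt (hs i))).
Qed.

End Cont2.

Section Final.
Variables d k j : nat.
Variable f : PtY d k -> PtU j k.
Hypothesis hf : forall x, inYeq x -> inSUB (f x).
Hypothesis hc : @cont_on 'I_k 'I_d.+1 'I_j (Z2k k) (@inYeq d k) f.
Hypothesis he : forall (g : Wk k) x, inYeq x -> f (actY g x) = actUj g (f x).
Hypothesis hj : leq 1 j.

Definition Phi (x : PtY d k) : PtU j k := fun i g =>
  rho x * f (Nm x) i g + (if nat_of_ord i == j.-1 then Tv (tl x) g else 0).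

Definition Fm (x : PtY d k) : PtU j k := fun i g => Phi x i g * / sqrt (normsq (Phi x)).

Lemma Nm_ok (x : PtY d k) : inY x -> rho x <> 0 -> @inYeq d k (Nm x).
Proof. move=> hx hr; apply: Nm_inYeq => i; have := sN_pos i hx hr; lra. Qed.

Lemma normsq_ge (y : PtU j k) i g : y i g ^ 2 <= normsq y.
Proof.
have h1 := @rsum_ge_term _ (fun i => rsum (fun g => y i g ^ 2)) i (fun t => rsum_ge0 (fun u => pow2_ge_0 _)).
have h2 := @rsum_ge_term _ (fun g => y i g ^ 2) g (fun t => pow2_ge_0 _).
exact: Rle_trans h2 h1.
Qed.

Lemma entry_le1 (y : PtU j k) i g : normsq y = 1 -> Rabs (y i g) <= 1.
Proof.
move=> hn; have h3 := normsq_ge y i g; rewrite hn -pow2_abs in h3.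
have := Rabs_pos (y i g); nra.
Qed.

Lemma hj' : leq (j.-1).+1 j. Proof. by rewrite ltn_predL. Qed.
Definition i0 : 'I_j := Ordinal hj'.

Lemma Phi_pos x : inY x -> 0 < normsq (Phi x).
Proof.
move=> hx.
destruct (classic (forall l, tl x l = 0)) as [H0|H0].
  have hr : rho x = 1 by apply: rho_one.
  have hN := Nm_ok hx ltac:(lra).
  have -> : Phi x = f (Nm x).
    apply: functional_extensionality => i; apply: functional_extensionality => g.
    rewrite /Phi hr (_ : Tv (tl x) g = 0); first by case: (_ == _); ring.
    by apply: rsum_eq0 => l; rewrite H0; ring.
  by have [_ ->] := hf hN; lra.
have [l hl] : exists l, tl x l <> 0 by apply: not_all_ex_not.
have hs : rsum (fun g => Phi x i0 g * sgnb (g l)) = tl x l * rsum (fun _ : Z2k k => 1).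
  rewrite -Tv_dot.
  have -> : rsum (fun g => Phi x i0 g * sgnb (g l)) =
      rho x * rsum (fun g => f (Nm x) i0 g * sgnb (g l)) + rsum (fun g => Tv (tl x) g * sgnb (g l)).
    by rewrite -rsum_scal -rsum_split; apply: rsum_ext => g; rewrite /Phi /= eqxx; ring.
  suff -> : rho x * rsum (fun g => f (Nm x) i0 g * sgnb (g l)) = 0 by ring.
  destruct (Req_dec (rho x) 0) as [E|E]; first by rewrite E; ring.
  have [H1 _] := hf (Nm_ok hx E).
  have := H1 i0; rewrite /= eqxx => /(@WB_props k) [_ ->]; ring.
have hne : rsum (fun g => Phi x i0 g * sgnb (g l)) <> 0.
  by rewrite hs; apply: Rmult_integral_contrapositive; split => //; have := @rsum1_pos k; lra.
have [g hg] : exists g, Phi x i0 g <> 0.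
  apply: NNPP => hn; apply: hne; apply: rsum_eq0 => g.
  by rewrite (NNPP _ (fun h => hn (ex_intro _ g h))); ring.
have := normsq_ge (Phi x) i0 g; have : 0 < Phi x i0 g ^ 2 by simpl; rewrite Rmult_1_r; apply: Rsqr_pos_lt.
lra.
Qed.

Lemma Phi_U x i : inY x -> inU (Phi x i).
Proof.
move=> hx; rewrite /inU /Phi rsum_split rsum_scal.
have -> : rsum (fun g => if nat_of_ord i == j.-1 then Tv (tl x) g else 0) = 0.
  by case: (_ == _); [apply: Tv_sum | apply: rsum0].
suff -> : rho x * rsum (f (Nm x) i) = 0 by ring.
destruct (Req_dec (rho x) 0) as [E|E]; first by rewrite E; ring.
have [H1 _] := hf (Nm_ok hx E); have := H1 i.
case: (_ == _) => [/(@WB_props k) [-> _] | ->]; ring.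
Qed.

Lemma Fm_SU x : inY x -> inSU (Fm x).
Proof.
move=> hx; have hp := Phi_pos hx; split.
  move=> i; rewrite /inU /Fm.
  rewrite (rsum_ext (G := fun g => / sqrt (normsq (Phi x)) * Phi x i g)); last by move=> g; ring.
  by rewrite rsum_scal (Phi_U i hx); ring.
rewrite /normsq /Fm.
rewrite (rsum_ext (G := fun i => / normsq (Phi x) * rsum (fun g => Phi x i g ^ 2))).
  by rewrite rsum_scal -/(normsq (Phi x)); field; lra.
move=> i; rewrite -rsum_scal; apply: rsum_ext => g.
have hs : sqrt (normsq (Phi x)) * sqrt (normsq (Phi x)) = normsq (Phi x) by apply: sqrt_sqrt; lra.
have hs0 : sqrt (normsq (Phi x)) <> 0 by apply: Rgt_not_eq; apply: sqrt_lt_R0.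
set s := sqrt _ in hs hs0 *; rewrite -hs; field; done.
Qed.

Lemma Phi_act (h : Wk k) x : inY x -> Phi (actY h x) = actUj h (Phi x).
Proof.
move=> hx; apply: functional_extensionality => i; apply: functional_extensionality => g.
rewrite /Phi /actUj /actU rho_act Tv_act; congr (_ + _).
destruct (Req_dec (rho x) 0) as [E|E]; first by rewrite E; ring.
by rewrite Nm_act he //; apply: Nm_ok.
Qed.

Lemma Fm_act (h : Wk k) x : inY x -> Fm (actY h x) = actUj h (Fm x).
Proof.
move=> hx; rewrite /Fm (Phi_act h hx) normsq_act.
by apply: functional_extensionality => i; apply: functional_extensionality => g.
Qed.

Lemma c_G x0 i g : inY x0 -> rcat (@inY d k) (fun x => rho x * f (Nm x) i g) x0.
Proof.
move=> hx0.
destruct (Req_dec (rho x0) 0) as [E|E].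
  apply: cat_bmul (c_rho _) E _ => x px hr.
  by apply: entry_le1; have [_ ->] := hf (Nm_ok px hr).
apply: cat_mul; first exact: c_rho.
apply: (@vat_coord _ _ _ _ _ (fun x => f (Nm x))).
move=> eps heps.
have hN0 := Nm_ok hx0 E.
have [del1 [hd1 H1]] := hc hN0 heps.
have hs : forall i, 0 < sN x0 i by move=> l; have := sN_pos l hx0 E; lra.
have [del2 [hd2 H2]] := vat_Nm hs hd1.
have hr0 : 0 < rho x0 by have := rho_ge0 x0; lra.
have [r [hr Hr]] := c_rho x0 hr0.
exists (Rmin del2 r); split; first by apply: Rmin_pos.
move=> x px hx.
have hx1 := Rlt_le_trans _ _ _ hx (Rmin_l _ _).
have hx2 := Rlt_le_trans _ _ _ hx (Rmin_r _ _).
have hrx : rho x <> 0.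
  have := Hr x px hx2; move=> /Rabs_def2 [a b]; lra.
exact: (H1 (Nm x) (Nm_ok px hrx) (H2 x px hx1)).
Qed.

Lemma c_Phi x0 i g : inY x0 -> rcat (@inY d k) (fun x => Phi x i g) x0.
Proof.
move=> hx0; rewrite /Phi; apply: cat_add; first exact: c_G.
case: (_ == _); last exact: cat_const.
by apply: cat_rsum => l; apply: cat_mul; [apply: c_tl | apply: cat_const].
Qed.

Lemma Fm_vat x0 : inY x0 -> vat (@inY d k) Fm x0.
Proof.
move=> hx0; apply: coord_vat => i g; rewrite /Fm.
apply: cat_mul; first exact: c_Phi.
apply: (cat_comp (phi := fun z => / sqrt z)); last exact: cont_invsqrt (Phi_pos hx0).
by apply: cat_rsum => i'; apply: cat_rsum => g'; apply: cat_pow2; apply: c_Phi.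
Qed.

End Final.


End Aux.
Import Aux.

Theorem proposition3p3 (d k j : nat) :
  (1 <= d)%N -> (1 <= k)%N -> (1 <= j)%N ->
  ~ @exists_equiv_map d j k (@inY d k) (@inSU j k) ->
  ~ @exists_equiv_map d j k (@inYeq d k) (@inSUB j k).
Proof.
move=> _ _ hj H [f [hf [hc he]]]; apply: H.
exists (Fm f); split; first by move=> x hx; apply: Fm_SU.
split; last by move=> g x hx; apply: Fm_act.
by move=> x hx; apply: Fm_vat.
Qed.
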